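(* Let $\{X_\sigma,\pi^\sigma_\varrho,\Sigma\}$ be an inverse system of topological spaces such that all bonding maps $\pi^\sigma_\varrho$ are skeletal and all limit projections $\pi_\sigma:\varprojlim\{X_\sigma,\pi^\sigma_\varrho,\Sigma\}\to X_\sigma$ are onto. Then every projection $\pi_\sigma$ is skeletal.
   Context: A continuous surjection $f:X\to Y$ is skeletal if for every non-empty open $U\subseteq X$ the closure of $f[U]$ has non-empty interior. *)

(* Defs.v *)
From HB Require Import structures.
From mathcomp Require Import all_boot all_order all_algebra.
From mathcomp Require Import all_classical topology.
Set Implicit Arguments. Unset Strict Implicit. Unset Printing Implicit Defensive.
Import Order.TTheory.
Local Open Scope classical_set_scope.
Local Open Scope order_scope.

Definition skeletal {X Y : topologicalType} (f : X -> Y) : Prop :=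
  continuous f /\ (forall y : Y, exists x : X, f x = y) /\
  (forall U : set X, open U -> U !=set0 ->
     (interior (closure (f @` U))) !=set0).

Definition directed {d : Order.disp_t} (I : porderType d) : Prop :=
  forall a b : I, exists c : I, a <= c /\ b <= c.

(* Inverse system {X_s, pi^s_r, I}: pi s r : X s -> X r is the bonding map
   pi^s_r, meaningful only for r <= s (its values for other pairs are
   irrelevant). *)
Definition inverse_system {d : Order.disp_t} {I : porderType d}
  (X : I -> topologicalType) (pi : forall s r : I, X s -> X r) : Prop :=
  (forall s : I, forall x : X s, pi s s x = x) /\
  (forall r s t : I, r <= s -> s <= t -> forall x : X t,
      pi s r (pi t s x) = pi t r x) /\
  (forall r s : I, r <= s -> continuous (pi s r)).

Definition invlim_set {d : Order.disp_t} {I : porderType d}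
  (X : I -> topologicalType) (pi : forall s r : I, X s -> X r)
  : set (prod_topology X) :=
  [set x | forall r s : I, r <= s -> pi s r (x s) = x r].

(* The inverse limit, with the subspace topology of the product topology
   (mathcomp-analysis's topology on set_type = initial topology of the
   inclusion). *)
Definition invlim {d : Order.disp_t} {I : porderType d}
  (X : I -> topologicalType) (pi : forall s r : I, X s -> X r)
  : topologicalType := set_type (invlim_set pi).

Definition invlim_proj {d : Order.disp_t} {I : porderType d}
  (X : I -> topologicalType) (pi : forall s r : I, X s -> X r) (s : I)
  : invlim pi -> X s := fun x => (set_val x : prod_topology X) s.
Arguments invlim_proj {d I X} pi s _.

(* Main.v *)
Require Import Defs.
From HB Require Import structures.
From mathcomp Require Import all_boot all_order all_algebra.
From mathcomp Require Import all_classical topology.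
Import Order.TTheory.
Local Open Scope classical_set_scope.
Local Open Scope order_scope.

Section Aux.
Context (d : Order.disp_t) (I : porderType d)
  (X : I -> topologicalType) (pi : forall s r : I, X s -> X r).
Hypotheses (dirI : directed I) (isys : inverse_system pi).

Let L := invlim pi.

Definition Bset (p : {t : I & set (X t)}) : set L :=
  invlim_proj pi (projT1 p) @^-1` projT2 p.
Definition Dset (x : L) : set {t : I & set (X t)} :=
  [set p : {t : I & set (X t)} | open (projT2 p) /\ projT2 p (invlim_proj pi (projT1 p) x)].

Lemma proj_compat (x : L) r t : r <= t ->
  pi t r (invlim_proj pi t x) = invlim_proj pi r x.
Proof.
move=> rt; rewrite /invlim_proj.
case: x => v Hv /=; have := set_mem Hv; exact.
Qed.

Lemma F_filter (s0 : I) (x : L) : Filter (filter_from (Dset x) Bset).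
Proof.
case: isys => [Hid [Hcomp Hcont]].
apply: filter_from_filter.
  by exists (existT _ s0 setT); split => //; exact: openT.
move=> [t1 V1] [t2 V2] [/= o1 v1] [/= o2 v2].
have [t [le1 le2]] := dirI t1 t2.
exists (existT _ t (pi t t1 @^-1` V1 `&` pi t t2 @^-1` V2)).
  split => /=.
    apply: openI; apply: open_comp => // y _; exact: Hcont.
  by split; rewrite /= proj_compat.
by move=> y [/=]; rewrite /Bset /= => h1 h2; split; [rewrite /= -(proj_compat _ _ _ le1)|rewrite /= -(proj_compat _ _ _ le2)].
Qed.

Lemma nbhs_F (s0 : I) (x : L) (A : set L) :
  nbhs x A -> filter_from (Dset x) Bset A.
Proof.
have FF := F_filter s0 x.
rewrite nbhsE => -[B [oB Bx BA]].
apply: (@filterS _ _ FF _ _ BA).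
case: oB => C oC CB.
have G : (set_val @ filter_from (Dset x) Bset) --> (set_val x : prod_topology X).
  apply/(@cvg_sup (forall i, X i) I (fun i => Topological.class
    (initial_topology (fun f : (forall i, X i) => f i)))).
  move=> i U.
  rewrite (@nbhsE (initial_topology (fun f : (forall i, X i) => f i))).
  move=> -[B' [[C' oC' <-] B'x B'U]].
  exists (existT _ i C') => //.
  by move=> y /= Cy; apply: B'U.
rewrite -CB; apply: G; apply: open_nbhs_nbhs; split => //.
by rewrite -CB in Bx.
Qed.
End Aux.

Theorem proposition3 (d : Order.disp_t) (I : porderType d)
  (X : I -> topologicalType) (pi : forall s r : I, X s -> X r) :
  directed I ->
  inverse_system pi ->
  (forall r s : I, r <= s -> skeletal (pi s r)) ->
  (forall s : I, forall y : X s, exists x : invlim pi, invlim_proj pi s x = y) ->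
  forall s : I, skeletal (invlim_proj pi s).
Proof.
move=> dirI isys skel surj s.
have isys' := isys; case: isys' => [_ [_ Hcont]].
split.
  move=> x; apply: (@continuous_comp _ _ _ set_val (fun f : prod_topology X => f s)).
    exact: initial_continuous.
  exact: proj_continuous.
split; first exact: surj.
move=> U oU [x Ux].
have := @nbhs_F d I X pi dirI isys s x U (open_nbhs_nbhs (conj oU Ux)).
move=> [[t V] [/= oV Vx] BU].
have [t' [st tt']] := dirI s t.
pose V' := pi t' t @^-1` V.
have oV' : open V' by apply: open_comp => // y _; exact: Hcont.
have := (skel s t' st).2.2 V' oV'.
case.
  by exists (invlim_proj pi t' x); rewrite /V' /= proj_compat.
move=> y Hy; exists y; move: Hy; apply: interiorS; apply: closureS.
move=> _ [v V'v <-].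
have [z zv] := surj t' v.
exists z.
  apply: BU; rewrite /Bset /= -(@proj_compat _ _ _ _ z _ _ tt') zv; exact: V'v.
by rewrite -zv (@proj_compat _ _ _ _ z _ _ st).
Qed.
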